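(* Let $d\ge 1$ be an integer and for $s\ge 1$ let $N_d(s)$ denote the number of $(s,s+1)$-core partitions with $d$-distinct parts. Then $N_d(s)=s$ for $1\le s\le d+1$, and for all $s\ge d+2$, $$N_d(s)=N_d(s-1)+N_d(s-(d+1)).$$
   Context: A partition $\lambda=(\lambda_1,\ldots,\lambda_l)$ is a finite nonincreasing sequence of positive integers (the empty partition is allowed and counted). $\lambda$ is a partition with $d$-distinct parts if $\lambda_i-\lambda_{i+1}\ge d$ for all $1\le i\le l-1$. In the Young diagram of $\lambda$, the hook length of box $(i,j)$ is the number of boxes directly to its right, plus the number directly below it, plus one. $\lambda$ is an $(s,s+1)$-core partition if no box has hook length $s$ or $s+1$. *)

(* Defs.v *)
From mathcomp Require Import all_boot.
Set Implicit Arguments. Unset Strict Implicit. Unset Printing Implicit Defensive.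

(* Indices below are 0-based. *)
Definition is_partition (la : seq nat) : Prop :=
  sorted geq la /\ all (fun x => 0 < x) la.

Definition d_distinct (d : nat) (la : seq nat) : Prop :=
  forall i, i.+1 < size la -> nth 0 la i.+1 + d <= nth 0 la i.

(* Hook length of box (i,j) (row i, column j, 0-based; the box exists iff
   i < size la and j < la_i): boxes to the right (la_i - j - 1), plus boxes
   below (number of rows k > i with la_k > j), plus one. *)
Definition hook (la : seq nat) (i j : nat) : nat :=
  (nth 0 la i - j.+1) + count (fun x => j < x) (drop i.+1 la) + 1.

Definition is_box (la : seq nat) (i j : nat) : Prop :=
  i < size la /\ j < nth 0 la i.

Definition is_ss1_core (s : nat) (la : seq nat) : Prop :=
  forall i j, is_box la i j -> hook la i j <> s /\ hook la i j <> s.+1.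

Definition core_ddistinct (d s : nat) (la : seq nat) : Prop :=
  is_partition la /\ d_distinct d la /\ is_ss1_core s la.

Definition has_card (P : seq nat -> Prop) (n : nat) : Prop :=
  exists l : seq (seq nat), uniq l /\ (forall x, x \in l <-> P x) /\ size l = n.

(* Main.v *)
Require Import Defs.
From mathcomp Require Import all_boot.
From mathcomp Require Import zify.
Set Implicit Arguments. Unset Strict Implicit.

Definition DD (d : nat) (x : seq nat) : Prop :=
  all (fun y => 0 < y) x /\ d_distinct d x.

Lemma DD_nil d : DD d [::].
Proof. by split => // i. Qed.

Lemma DD_cons d a m : DD d (a :: m) <->
  [/\ 0 < a, m = [::] \/ nth 0 m 0 + d <= a & DD d m].
Proof.
split.
- case=> /= /andP[Ha Hm] Hd; split => //.
  + case: m Hm Hd => [|b m] Hm Hd; [by left|right]. by apply: (Hd 0).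
  + split => // i Hi. exact: (Hd i.+1 Hi).
- case=> Ha Hh [Hm Hd]; split; first by rewrite /= Ha Hm.
  case=> [|i] /= Hi.
  + case: Hh => [Em|//]. by rewrite Em in Hi.
  + exact: Hd.
Qed.

Lemma DD_all d a m : DD d (a :: m) -> all (fun y => y + d <= a) m.
Proof.
elim: m a => [|b m IH] a H //=.
have [Ha Hh Hm] := (DD_cons d a (b :: m)).1 H.
have Hb : b + d <= a by case: Hh.
rewrite Hb /=.
apply/allP => y Hy. move/allP: (IH b Hm) => /(_ y Hy). lia.
Qed.

Lemma DD_sorted d x : DD d x -> sorted geq x.
Proof.
elim: x => [|a m IH] H //=.
have [Ha Hh Hm] := (DD_cons d a m).1 H.
have := IH Hm. case: m Hh {H Hm IH} => [|b m] Hh //= ->.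
rewrite andbT. case: Hh => //= Hb. apply/leP. lia.
Qed.

Lemma ivt s : forall n (g : nat -> nat), g n <= s -> s <= g 0 ->
  (forall k, k < n -> g k <= g k.+1 + 2) ->
  exists k, k <= n /\ (g k = s \/ g k = s.+1).
Proof.
elim=> [|n IH] g Hn H0 Hs.
  exists 0; split => //; left; lia.
case: (leqP s (g 1)) => H1.
- have [k [Hk Hg]] := IH (fun k => g k.+1) Hn H1 (fun k Hk => Hs k.+1 Hk).
  by exists k.+1.
- exists 0. have := Hs 0 (ltn0Sn n). split => //; lia.
Qed.

Lemma cnt d k m : 1 <= d -> DD d m ->
  count (fun y => k < y) m <= count (fun y => k.+1 < y) m + 1.
Proof.
move=> hd; elim: m => [|b m IH] H //=.
have [Hb Hh Hm] := (DD_cons d b m).1 H.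
have Hall := DD_all H.
case: (eqVneq b k.+1) => [Eb|ne].
- have : ~~ has (fun y => k < y) m.
    apply/hasPn => y Hy. move/allP: Hall => /(_ y Hy). rewrite Eb. lia.
  rewrite has_count. have := IH Hm. rewrite Eb. lia.
- have E : (k.+1 < b) = (k < b) by rewrite ltn_neqAle eq_sym ne.
  rewrite E. have := IH Hm. case: (k < b) => /=; lia.
Qed.

Lemma core_iff d s x : 1 <= d -> 1 <= s -> DD d x ->
  (is_ss1_core s x <-> x = [::] \/ nth 0 x 0 + size x <= s).
Proof.
move=> hd hs Hx; split.
- case: x Hx => [|a m] Hx Hc; first by left. right. rewrite /=.
  have Hall := DD_all Hx.
  have [Ha _ [Hm _]] := (DD_cons d a m).1 Hx.
  rewrite leqNgt; apply/negP => Hlt.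
  have [_ _ HDm] := (DD_cons d a m).1 Hx.
  have G1 : hook (a :: m) 0 a.-1 <= s.
    rewrite /hook /= drop0.
    have : ~~ has (fun y => a.-1 < y) m.
      apply/hasPn => y Hy. move/allP: Hall => /(_ y Hy). lia.
    rewrite has_count. lia.
  have G2 : s <= hook (a :: m) 0 0.
    rewrite /hook /= drop0. rewrite all_count in Hm. move/eqP: Hm => ->. lia.
  have G3 : forall k, k < a.-1 -> hook (a :: m) 0 k <= hook (a :: m) 0 k.+1 + 2.
    move=> k' Hk'. rewrite /hook /= !drop0.
    have := @cnt d k' m hd HDm. lia.
  have [k [Hk Hg]] := @ivt s (a.-1) (fun k => hook (a :: m) 0 k) G1 G2 G3.
  have Hbox : is_box (a :: m) 0 k by split => //=; lia.
  have [Hb1 Hb2] := Hc 0 k Hbox.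
  by case: Hg.
- case: x Hx => [|a m] Hx.
    by move=> _ i j [Hi _].
  case => // Hh i j [Hi Hj].
  have Hle : nth 0 (a :: m) i <= a.
    case: i Hi {Hj} => [|i] Hi //=.
    have Hin : nth 0 m i \in m by apply: mem_nth.
    move/allP: (DD_all Hx) => /(_ _ Hin). lia.
  have Hc := count_size (fun x => j < x) (drop i.+1 (a :: m)).
  rewrite size_drop in Hc.
  rewrite /hook. simpl in Hh, Hi. move: Hc Hle Hh Hi. rewrite /=. lia.
Qed.

Fixpoint L (d f s : nat) : seq (seq nat) :=
  match f with
  | 0 => [:: [::]]
  | f'.+1 => match s with
             | 0 => [:: [::]]
             | s'.+1 => L d f' s' ++
                 (if s' is 0 then [::]
                  else [seq (s' - size mu) :: mu | mu <- L d f' (s - d.+1)])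
             end
  end.

Definition P (d s : nat) (x : seq nat) : Prop :=
  DD d x /\ (x = [::] \/ nth 0 x 0 + size x <= s).

Lemma P0 d x : P d 0 x <-> x = [::].
Proof.
split; last by move=> ->; split; [exact: DD_nil|left].
case=> HD [//|]. case: x HD => [|a m] //= HD.
have [Ha _ _] := (DD_cons d a m).1 HD. lia.
Qed.

Lemma L0 d f : L d f 0 = [:: [::]].
Proof. by case: f. Qed.

Lemma Lspec d f s : s <= f ->
  uniq (L d f s) /\ forall x, x \in L d f s <-> P d s x.
Proof.
elim: f s => [|f IH] s Hs.
  have -> : s = 0 by lia.
  split => // x. rewrite P0 inE. split; [by move/eqP|by move=> ->].
case: s Hs => [|s'] Hs.
  split => // x. rewrite P0 inE. split; [by move/eqP|by move=> ->].
have [U1 M1] := IH s' Hs.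
pose E := (if s' is 0 then [::] else [seq (s' - size mu) :: mu | mu <- L d f (s'.+1 - d.+1)]).
change (L d f.+1 s'.+1) with (L d f s' ++ E).
have ME : forall x, x \in E <-> DD d x /\ x <> [::] /\ nth 0 x 0 + size x = s'.+1.
  move=> x; rewrite /E; case: s' Hs IH U1 M1 {E} => [|s'] Hs IH U1 M1.
    split => //. case=> HD [Hne He]. case: x HD Hne He => [|a m] //= HD _ He.
    have [Ha _ _] := (DD_cons d a m).1 HD. lia.
  have [U2 M2] := IH (s'.+2 - d.+1) ltac:(lia).
  split.
  - case/mapP => mu Hmu ->. have [HDm Hh] := (M2 mu).1 Hmu.
    have Hsz : size mu <= s'.
      case: Hh => [->//|]. case: mu HDm {Hmu} => [|b m] //= HDm.
      have [Hb _ _] := (DD_cons d b m).1 HDm. lia.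
    split; [|split; [done|rewrite /= addnS subnK //; exact: leqW]].
    apply/DD_cons; split => //.
    + case: Hh => [->|Hh]; first by rewrite subn0.
      case: mu HDm Hh {Hmu Hsz} => [|b m] //= HDm Hh.
      have [Hb _ _] := (DD_cons d b m).1 HDm. lia.
    + case: Hh => [->|Hh]; [by left|].
      case: mu HDm Hh {Hmu Hsz} => [|b m] HDm Hh; [by left|right].
      have [Hb _ _] := (DD_cons d b m).1 HDm. move: Hh; rewrite /=; lia.
  - case=> HD [Hne He]. case: x HD Hne He => [|a m] //= HD _ He.
    apply/mapP. exists m; last by congr cons; lia.
    apply/M2. have [Ha Hh HDm] := (DD_cons d a m).1 HD.
    split => //. case: Hh => [->|Hh]; [by left|right]. lia.
have UE : uniq E.
  rewrite /E; case Es: s' => [//|s''].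
  rewrite map_inj_uniq; first by have [] := IH (s''.+2 - d.+1) ltac:(lia).
  by move=> u v [].
split.
- rewrite cat_uniq U1 UE andbT /=. apply/hasPn => x Hx. apply/negP => Hx1.
  have [_ [Hne He]] := (ME x).1 Hx. have [_ Hh] := (M1 x).1 Hx1.
  case: Hh => // Hh. by move: Hh; rewrite He ltnn.
- move=> x. rewrite mem_cat. split.
  + case/orP => [/M1 [HD Hh] | /ME [HD [Hne He]]]; split => //.
    * case: Hh => [->|Hh]; [by left|right; lia].
    * by right; rewrite He.
  + case=> HD Hh. case: Hh => [->|Hh].
      apply/orP; left. apply/M1. split => //; by left.
    case: (leqP (nth 0 x 0 + size x) s') => H'.
      apply/orP; left. apply/M1. split => //; by right.
    apply/orP; right. apply/ME. split => //. split; last by apply/eqP; rewrite eqn_leq Hh H'.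
    by move=> Ex; rewrite Ex in H'.
Qed.

Lemma Lsize d f s : s <= f -> size (L d f s) = size (L d s s).
Proof.
move=> Hs. have [U1 M1] := Lspec d Hs. have [U2 M2] := Lspec d (leqnn s).
apply: perm_size. apply: uniq_perm => // x.
apply/idP/idP => H; [apply/M2; apply/M1|apply/M1; apply/M2] => //.
Qed.

Theorem mainTheorem4 (d : nat) (hd : 1 <= d) :
  exists N : nat -> nat,
    (forall s, 1 <= s -> has_card (core_ddistinct d s) (N s)) /\
    (forall s, 1 <= s <= d.+1 -> N s = s) /\
    (forall s, d.+2 <= s -> N s = N (s - 1) + N (s - d.+1)).
Proof.
exists (fun s => size (L d s s)). split; [|split].
- move=> s hs. exists (L d s s). have [U M] := Lspec d (leqnn s).
  split => //; split => // x. rewrite M. split.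
  + case=> HD H. have [Hpos Hdd] := HD.
    split; first by split; [exact: (DD_sorted HD)|exact: Hpos].
    split; first exact: Hdd. exact/(core_iff hd hs HD).
  + case=> [[_ Hpos] [Hd Hc]].
    have HD : DD d x by [].
    split => //. exact/(core_iff hd hs HD).
- elim=> [//|s IH] /andP[H1 H2].
  rewrite /= size_cat.
  case: s IH H1 H2 => [|s] IH H1 H2 //=.
  rewrite IH; last lia.
  have -> : s.+2 - d.+1 = 0 by lia.
  by rewrite /= addn1.
- case=> [|s] Hs; first lia.
  rewrite /= size_cat.
  case: s Hs => [|s] Hs; first lia.
  rewrite size_map (@Lsize d s.+1 (s.+2 - d.+1)); last lia.
  by rewrite subn1.
Qed.
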